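(* There exists $\theta_0\in(0,\pi/4)$, depending only on $\alpha$, such that for every $\theta\in(0,\theta_0)$ there exists $a_0(\theta)\ge1$ such that for every $a>a_0(\theta)$ and every $b\in(0,1)$ the following holds: if $p,q\in\mathbb H$ satisfy $p\notin B(q,r_q)$ and $q\notin B(p,r_p)$, then at most one of $p,q$ belongs to $\mathcal P(a,b,\theta)$.
   Context: $\mathbb H=\mathbb R^3$, $p=(x_p,y_p,z_p)$, group law $(x,y,z)\cdot(x',y',z')=(x+x',y+y',z+z'+\tfrac12(xy'-yx'))$, dilations $\delta_\lambda(x,y,z)=(\lambda x,\lambda y,\lambda^2z)$. Fix $\alpha>0$ such that $d_\alpha(p,q)=\inf\{r>0:\delta_{1/r}(p^{-1}\cdot q)\in B_\alpha\}$ is a distance, $B_\alpha$ the closed Euclidean ball of radius $\alpha$ at $0$. $B(p,r)=\{q:d_\alpha(q,p)\le r\}$, $r_p=d_\alpha(0,p)$. $\mathcal P(a,b,\theta)=\{p: x_p>a,\ |z_p|<b,\ |y_p|<x_p\tan\theta\}$. *)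

(* Defs.v *)
From Stdlib Require Import Reals Lra ClassicalEpsilon.
Open Scope R_scope.

Record H := mkH { xc : R; yc : R; zc : R }.

Definition hmul (p q : H) : H :=
  mkH (xc p + xc q) (yc p + yc q)
      (zc p + zc q + / 2 * (xc p * yc q - yc p * xc q)).

Definition hinv (p : H) : H := mkH (- xc p) (- yc p) (- zc p).

Definition h0 : H := mkH 0 0 0.

Definition dil (l : R) (p : H) : H := mkH (l * xc p) (l * yc p) (l ^ 2 * zc p).

Definition in_Balpha (alpha : R) (p : H) : Prop :=
  xc p ^ 2 + yc p ^ 2 + zc p ^ 2 <= alpha ^ 2.

Definition is_inf (S : R -> Prop) (m : R) : Prop :=
  (forall r, S r -> m <= r) /\ (forall m', (forall r, S r -> m' <= r) -> m' <= m).

(* the infimum (chosen classically; the set below is nonempty and bounded below by 0) *)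
Definition Rinf (S : R -> Prop) : R :=
  epsilon (inhabits 0) (fun m => is_inf S m).

Definition d_alpha (alpha : R) (p q : H) : R :=
  Rinf (fun r => 0 < r /\ in_Balpha alpha (dil (/ r) (hmul (hinv p) q))).

Definition is_distance (d : H -> H -> R) : Prop :=
  (forall p q, 0 <= d p q) /\
  (forall p q, d p q = 0 <-> p = q) /\
  (forall p q, d p q = d q p) /\
  (forall p q s, d p s <= d p q + d q s).

Definition in_ball (alpha : R) (p : H) (r : R) (q : H) : Prop :=
  d_alpha alpha q p <= r.

Definition r_pt (alpha : R) (p : H) : R := d_alpha alpha h0 p.

Definition in_P (a b theta : R) (p : H) : Prop :=
  xc p > a /\ Rabs (zc p) < b /\ Rabs (yc p) < xc p * tan theta.

(* Main.v *)
Require Import Defs.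
From Stdlib Require Import Reals Lra Psatz ClassicalEpsilon.
Open Scope R_scope.

Lemma Rinf_spec (S : R -> Prop) :
  (forall r, S r -> 0 < r) -> (exists r, S r) -> is_inf S (Rinf S).
Proof.
  intros Hpos [r0 Hr0]. unfold Rinf. apply epsilon_spec.
  destruct (completeness (fun x => S (- x))) as [m [Hub Hl]].
  - exists 0. intros x Hx. apply Hpos in Hx. lra.
  - exists (- r0). rewrite Ropp_involutive. exact Hr0.
  - exists (- m). split.
    + intros r Hr. assert (- r <= m) by (apply Hub; rewrite Ropp_involutive; exact Hr). lra.
    + intros m' Hm'. assert (m <= - m').
      { apply Hl. intros x Hx. apply Hm' in Hx. lra. }
      lra.
Qed.

Lemma ex_r (alpha x y z : R) : 0 < alpha ->
  exists r, 0 < r /\ (/ r * x) ^ 2 + (/ r * y) ^ 2 + ((/ r) ^ 2 * z) ^ 2 <= alpha ^ 2.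
Proof.
  intros Ha.
  set (M := Rabs x + Rabs y + Rabs z).
  assert (HM : 0 <= M) by (unfold M; pose proof (Rabs_pos x); pose proof (Rabs_pos y); pose proof (Rabs_pos z); lra).
  exists (M / alpha + 1).
  assert (Hr : 0 < M / alpha + 1).
  { assert (0 <= M / alpha) by (unfold Rdiv; apply Rmult_le_pos; [lra| left; apply Rinv_0_lt_compat; lra]). lra. }
  split; [exact Hr|].
  set (r := M / alpha + 1) in *.
  set (s := / r).
  assert (Hs : 0 < s) by (apply Rinv_0_lt_compat; exact Hr).
  assert (Hrs : r * s = 1) by (unfold s; field; lra).
  assert (Hr1 : 1 <= r) by (unfold r; assert (0 <= M / alpha) by (unfold Rdiv; apply Rmult_le_pos; [lra| left; apply Rinv_0_lt_compat; lra]); lra).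
  assert (Hs1 : s <= 1) by nra.
  assert (HMa : M <= alpha * r) by (unfold r; field_simplify; [|lra]; unfold Rdiv; nra).
  assert (HsM : s * M <= alpha) by nra.
  assert (E1 : (s * x) ^ 2 = (s * Rabs x) ^ 2).
  { replace ((s*x)^2) with (Rabs (s*x) ^2) by (rewrite RPow_abs, Rabs_pos_eq; [reflexivity| apply pow2_ge_0]).
    rewrite Rabs_mult, (Rabs_pos_eq s); lra. }
  assert (E2 : (s * y) ^ 2 = (s * Rabs y) ^ 2).
  { replace ((s*y)^2) with (Rabs (s*y) ^2) by (rewrite RPow_abs, Rabs_pos_eq; [reflexivity| apply pow2_ge_0]).
    rewrite Rabs_mult, (Rabs_pos_eq s); lra. }
  assert (E3 : (s^2 * z) ^ 2 = (s^2 * Rabs z) ^ 2).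
  { replace ((s^2*z)^2) with (Rabs (s^2*z) ^2) by (rewrite RPow_abs, Rabs_pos_eq; [reflexivity| apply pow2_ge_0]).
    rewrite Rabs_mult, (Rabs_pos_eq (s^2)); [reflexivity| apply pow2_ge_0]. }
  rewrite E1, E2, E3.
  pose proof (Rabs_pos x); pose proof (Rabs_pos y); pose proof (Rabs_pos z).
  assert (s^2 <= s) by nra.
  assert (s^2 * Rabs z <= s * Rabs z) by (apply Rmult_le_compat_r; lra).
  assert (0 <= s ^2 * Rabs z) by (apply Rmult_le_pos; [apply pow2_ge_0|lra]).
  unfold M in HsM.
  assert (0 <= s * Rabs x) by (apply Rmult_le_pos; lra).
  assert (0 <= s * Rabs y) by (apply Rmult_le_pos; lra).
  assert (0 <= s * Rabs z) by (apply Rmult_le_pos; lra).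
  assert (s * Rabs x + s * Rabs y + s * Rabs z <= alpha) by (replace (s * Rabs x + s * Rabs y + s * Rabs z) with (s * (Rabs x + Rabs y + Rabs z)) by ring; lra).
  set (u := s * Rabs x) in *. set (v := s * Rabs y) in *. set (w := s^2 * Rabs z) in *.
  assert (u + v + w <= alpha) by lra.
  nra.
Qed.
Lemma key alpha a t x X yp yq zp zq s :
 0<alpha -> 6*(1+alpha) <= a -> 0 < t -> t*(2*(1+alpha)) <= 1 -> a < x -> x <= X ->
 Rabs yp < x*t -> Rabs yq < X*t -> Rabs zp < 1 -> Rabs zq < 1 ->
 (s*X)^2 + (s*yq)^2 + (s^2*zq)^2 <= alpha^2 ->
 (s*(-x+X))^2 + (s*(-yp+yq))^2 + (s^2*(-zp+zq + /2*(-x*yq - -yp*X)))^2 <= alpha^2.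
Proof.
  intros Ha Ha0 Ht Ht0 Hx HxX Hyp Hyq Hzp Hzq H.
  apply Rabs_def2 in Hyp, Hyq, Hzp, Hzq.
  destruct Hyp as [Hyp1 Hyp2]; destruct Hyq as [Hyq1 Hyq2]; destruct Hzp as [Hzp1 Hzp2]; destruct Hzq as [Hzq1 Hzq2].
  assert (Hx0 : 0 < x) by lra.
  assert (HX0 : 0 < X) by lra.
  set (dz := -zp+zq + /2*(-x*yq - -yp*X)).
  assert (h1 : (-x+X)^2 <= X^2 - x*X) by nra.
  assert (hyp2 : yp^2 <= x*X*t^2) by nra.
  assert (hyy : - yq*yp <= x*X*t^2) by nra.
  assert (h2 : (-yp+yq)^2 <= yq^2 + 3*(x*X*t^2)) by nra.
  assert (hxy1 : x*yq < x*X*t) by nra.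
  assert (hxy2 : -(x*X*t) < x*yq) by nra.
  assert (hxy3 : yp*X < x*X*t) by nra.
  assert (hxy4 : -(x*X*t) < yp*X) by nra.
  assert (hdz : dz^2 <= (2 + x*X*t)^2).
  { assert (-(2 + x*X*t) <= dz <= 2 + x*X*t) by (assert (dz = -zp+zq - /2*(x*yq) + /2*(yp*X)) by (unfold dz; ring); lra). nra. }
  assert (hdz2 : dz^2 <= 8 + 2*x^2*X^2*t^2).
  { assert ((2+x*X*t)^2 <= 8 + 2*(x*X*t)^2) by (pose proof (pow2_ge_0 (2 - x*X*t)); nra).
    replace (x^2*X^2*t^2) with ((x*X*t)^2) by ring. lra. }
  assert (hsX : (s*X)^2 <= alpha^2) by (pose proof (pow2_ge_0 (s*yq)); pose proof (pow2_ge_0 (s^2*zq)); lra).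
  assert (hs2 : 0 <= s^2) by apply pow2_ge_0.
  assert (h4 : s^2*dz^2 <= 8*s^2 + 2*x^2*t^2*alpha^2).
  { assert (s^2*dz^2 <= s^2*(8 + 2*x^2*X^2*t^2)) by (apply Rmult_le_compat_l; lra).
    assert (x^2*t^2*(s*X)^2 <= x^2*t^2*alpha^2) by (apply Rmult_le_compat_l; [apply Rmult_le_pos; apply pow2_ge_0| lra]).
    nra. }
  assert (h4b : x^2*t^2*alpha^2 <= x*X*t^2*alpha^2).
  { assert (x^2 <= x*X) by nra. assert (0 <= t^2*alpha^2) by nra. nra. }
  assert (ha4 : 32*alpha^2 <= a^4).
  { assert (36*alpha^2 <= a^2) by nra. assert (1 <= a^2) by nra.
    replace (a^4) with (a^2*a^2) by ring. nra. }
  assert (hxX3 : a^4 <= x*X*X^2) by (assert (a*a <= x*X) by nra; assert (a*a <= X^2) by nra; nra).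
  assert (h5 : 8*s^2 <= x*X/4).
  { assert (8*s^2*X^2 <= x*X/4*X^2) by nra.
    assert (0 < X^2) by nra. apply (Rmult_le_reg_r (X^2)); lra. }
  assert (h6 : 3*t^2 + 2*alpha^2*t^2 <= 3/4).
  { assert (ht2 : (t*(2*(1+alpha)))^2 <= 1) by (assert (0 <= t*(2*(1+alpha))) by nra; nra).
    assert ((3+2*alpha^2)*t^2 <= 3*(1+alpha)^2*t^2) by (apply Rmult_le_compat_r; nra).
    nra. }
  assert (h7 : x*X*(3*t^2 + 2*alpha^2*t^2) <= x*X*(3/4)) by (apply Rmult_le_compat_l; nra).
  assert (hsum : (-x+X)^2 + (-yp+yq)^2 + s^2*dz^2 <= X^2 + yq^2) by nra.
  assert (Hfin : s^2*((-x+X)^2 + (-yp+yq)^2 + s^2*dz^2) <= s^2*(X^2+yq^2)) by (apply Rmult_le_compat_l; lra).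
  assert (0 <= (s^2*zq)^2) by apply pow2_ge_0.
  replace ((s*(-x+X))^2 + (s*(-yp+yq))^2 + (s^2*dz)^2) with (s^2*((-x+X)^2 + (-yp+yq)^2 + s^2*dz^2)) by ring.
  replace ((s*X)^2 + (s*yq)^2 + (s^2*zq)^2) with (s^2*(X^2+yq^2) + (s^2*zq)^2) in H by ring.
  lra.
Qed.

Lemma dist_le alpha a theta b (p q : H) :
  0 < alpha -> 6*(1+alpha) <= a -> 0 < tan theta -> tan theta*(2*(1+alpha)) <= 1 -> b < 1 ->
  in_P a b theta p -> in_P a b theta q -> xc p <= xc q ->
  d_alpha alpha p q <= r_pt alpha q.
Proof.
  intros Ha Ha0 Ht Ht0 Hb Pp Pq Hle.
  unfold in_P in Pp, Pq.
  destruct Pp as [Pp1 [Pp2 Pp3]]; destruct Pq as [Pq1 [Pq2 Pq3]].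
  unfold r_pt, d_alpha.
  set (Sq := fun r => 0 < r /\ in_Balpha alpha (dil (/ r) (hmul (hinv h0) q))).
  set (Spq := fun r => 0 < r /\ in_Balpha alpha (dil (/ r) (hmul (hinv p) q))).
  assert (Hsub : forall r, Sq r -> Spq r).
  { intros r [Hr HB]. split; [exact Hr|].
    unfold in_Balpha, dil, hmul, hinv, h0 in *; cbn [xc yc zc] in *.
    destruct p as [xp yp zp]; destruct q as [xq yq zq]; cbn [xc yc zc] in *.
    replace (-0 + xq) with xq in HB by ring.
    replace (-0 + yq) with yq in HB by ring.
    replace (-0 + zq + / 2 * (-0 * yq - - 0 * xq)) with zq in HB by ring.
    replace (/ r ^ 2) with ((/ r) ^ 2) in * by (field; lra).
    apply (key alpha a (tan theta) xp xq yp yq zp zq (/ r)); try lra; try assumption. }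
  assert (Hex : exists r, Sq r).
  { destruct (ex_r alpha (xc (hmul (hinv h0) q)) (yc (hmul (hinv h0) q)) (zc (hmul (hinv h0) q)) Ha) as [r [Hr HB]].
    exists r. split; [exact Hr|]. unfold in_Balpha, dil. cbn [xc yc zc]. exact HB. }
  assert (Iq : is_inf Sq (Rinf Sq)) by (apply Rinf_spec; [intros r [Hr _]; exact Hr| exact Hex]).
  assert (Ipq : is_inf Spq (Rinf Spq)).
  { apply Rinf_spec; [intros r [Hr _]; exact Hr|]. destruct Hex as [r Hr]. exists r. apply Hsub, Hr. }
  destruct Iq as [_ Iq2]. destruct Ipq as [Ipq1 _].
  apply Iq2. intros r Hr. apply Ipq1, Hsub, Hr.
Qed.

Theorem lemma2p3 (alpha : R) (halpha : 0 < alpha)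
  (hdist : is_distance (d_alpha alpha)) :
  exists theta0 : R, 0 < theta0 < PI / 4 /\
    forall theta : R, 0 < theta < theta0 ->
      exists a0 : R, 1 <= a0 /\
        forall a b : R, a > a0 -> 0 < b < 1 ->
          forall p q : H,
            ~ in_ball alpha q (r_pt alpha q) p ->
            ~ in_ball alpha p (r_pt alpha p) q ->
            ~ (in_P a b theta p /\ in_P a b theta q).
Proof.
  set (t0 := / (2 * (1 + alpha))).
  assert (Ht0 : 0 < t0) by (unfold t0; apply Rinv_0_lt_compat; lra).
  assert (Ht01 : t0 < 1) by (unfold t0; rewrite <- Rinv_1; apply Rinv_lt_contravar; lra).
  pose proof PI_RGT_0 as HPI.
  exists (atan t0). split.
  { split.
    - rewrite <- atan_0. apply atan_increasing. exact Ht0.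
    - rewrite <- atan_1. apply atan_increasing. exact Ht01. }
  intros theta [Hth1 Hth2].
  assert (Hat : atan t0 < PI / 4) by (rewrite <- atan_1; apply atan_increasing; exact Ht01).
  assert (Htp : 0 < tan theta) by (apply tan_gt_0; lra).
  assert (Htt : tan theta < t0).
  { rewrite <- (tan_atan t0). apply tan_increasing; lra. }
  assert (Htt2 : tan theta * (2 * (1 + alpha)) <= 1).
  { assert (t0 * (2 * (1 + alpha)) = 1) by (unfold t0; field; lra).
    assert (tan theta * (2 * (1 + alpha)) < t0 * (2 * (1 + alpha))) by (apply Rmult_lt_compat_r; lra).
    lra. }
  exists (6 * (1 + alpha)). split; [lra|].
  intros a b Ha Hb p q Hnq Hnp [Pp Pq].
  unfold in_ball in Hnq, Hnp.
  destruct (Rle_dec (xc p) (xc q)) as [Hle|Hle].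
  - apply Hnq. apply (dist_le alpha a theta b p q); try lra; assumption.
  - apply Hnp. apply (dist_le alpha a theta b q p); try lra; assumption.
Qed.
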